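(* Let $H$ be a complex Hilbert space, $\varphi,\psi:[0,1]\to\mathbb{R}$ continuous, $t\in[0,1]$, and let $(A_n)\subset\mathbb{B}(H)$ and $A\in\mathbb{B}(H)$ satisfy $\|A_n-A\|_t\to0$ as $n\to\infty$. Then $$\omega_t(\varphi,\psi;A)=\lim_{n\to\infty}\omega_t(\varphi,\psi;A_n)\quad\text{and}\quad c_t(\varphi,\psi;A)=\lim_{n\to\infty}c_t(\varphi,\psi;A_n).$$
   Context: $S_1(H)$ is the unit sphere of $H$. For $B\in\mathbb{B}(H)$: $\|B\|_t=\|\varphi(t)B+\psi(t)B^*\|$ (operator norm), $\omega_t(\varphi,\psi;B)=\sup_{x\in S_1(H)}|\langle(\varphi(t)B+\psi(t)B^* )x,x\rangle|$, $c_t(\varphi,\psi;B)=\inf_{x\in S_1(H)}|\langle(\varphi(t)B+\psi(t)B^* )x,x\rangle|$. *)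

(* Defs.v *)
From HB Require Import structures.
From mathcomp Require Import all_boot all_order all_algebra.
From mathcomp Require Import complex.
From mathcomp Require Import all_classical all_reals all_analysis.
From Stdlib Require Import ClassicalEpsilon.
Set Implicit Arguments. Unset Strict Implicit. Unset Printing Implicit Defensive.
Import Order.TTheory GRing.Theory Num.Theory numFieldNormedType.Exports.
Local Open Scope ring_scope.
Local Open Scope classical_set_scope.

Section Hilbert.
Variable R : realType.
Variable V : lmodType R[i].
Variable ip : V -> V -> R[i].   (* inner product, linear in the 1st argument *)

Definition hnorm (x : V) : R := Num.sqrt (complex.Re (ip x x)).

Definition is_hilbert : Prop :=
  [/\ (forall (a : R[i]) (x y z : V), ip (a *: x + y) z = a * ip x z + ip y z),
      (forall x y : V, ip y x = conjc (ip x y)),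
      (forall x : V, 0 <= ip x x),
      (forall x : V, ip x x = 0 -> x = 0) &
      (forall u : nat -> V,
         (forall e : R, 0 < e -> exists N : nat, forall m n : nat,
            (N <= m)%N -> (N <= n)%N -> hnorm (u m - u n) < e) ->
         exists l : V, forall e : R, 0 < e -> exists N : nat, forall n : nat,
            (N <= n)%N -> hnorm (u n - l) < e)].

Definition bounded_op (B : V -> V) : Prop :=
  (forall (a : R[i]) (x y : V), B (a *: x + y) = a *: B x + B y) /\
  exists M : R, forall x : V, hnorm (B x) <= M * hnorm x.

Definition is_adjoint (B Bs : V -> V) : Prop :=
  forall x y : V, ip (B x) y = ip x (Bs y).

(* the adjoint B^* (unique when it exists; it exists for B \in B(H)) *)
Definition adj (B : V -> V) : V -> V :=
  epsilon (inhabits (fun x : V => x)) (fun Bs => is_adjoint B Bs).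

Definition S1 : set V := [set x | hnorm x = 1].

Definition opnorm (T : V -> V) : R := sup [set hnorm (T x) | x in S1].

Definition opt (phi psi : R -> R) (t : R) (B : V -> V) : V -> V :=
  fun x => real_complex R (phi t) *: B x + real_complex R (psi t) *: adj B x.

Definition tnorm (phi psi : R -> R) (t : R) (B : V -> V) : R :=
  opnorm (opt phi psi t B).

Definition omega_t (phi psi : R -> R) (t : R) (B : V -> V) : R :=
  sup [set Normc.normc (ip (opt phi psi t B x) x) | x in S1].

Definition c_t (phi psi : R -> R) (t : R) (B : V -> V) : R :=
  inf [set Normc.normc (ip (opt phi psi t B x) x) | x in S1].

End Hilbert.

(* Main.v *)
From Stdlib Require Import ClassicalEpsilon.
Require Import Defs.
From HB Require Import structures.
From mathcomp Require Import all_boot all_order all_algebra.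
From mathcomp Require Import complex.
From mathcomp Require Import all_classical all_reals all_analysis.
From mathcomp Require Import ring lra.
Import Order.TTheory GRing.Theory Num.Theory numFieldNormedType.Exports.
Local Open Scope ring_scope.
Local Open Scope classical_set_scope.


Section Basics.
Variable R : realType.
Variable V : lmodType R[i].
Variable ip : V -> V -> R[i].
Hypothesis hlin : forall (a : R[i]) (x y z : V), ip (a *: x + y) z = a * ip x z + ip y z.
Hypothesis hsym : forall x y : V, ip y x = conjc (ip x y).
Hypothesis hpos : forall x : V, 0 <= ip x x.
Hypothesis hdef : forall x : V, ip x x = 0 -> x = 0.

Local Notation N := (hnorm ip).
Definition rr x y := complex.Re (ip x y).

Lemma ip0l z : ip 0 z = 0.
Proof.
have := hlin 1 0 0 z; rewrite scaler0 addr0 mul1r => /eqP.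
by rewrite -subr_eq0 opprD addrA subrr add0r oppr_eq0 => /eqP ->.
Qed.

Lemma ipDl x y z : ip (x + y) z = ip x z + ip y z.
Proof. by rewrite -[x]scale1r hlin mul1r scale1r. Qed.

Lemma ipZl a x z : ip (a *: x) z = a * ip x z.
Proof. by rewrite -[a *: x]addr0 hlin ip0l addr0. Qed.

Lemma ipNl x z : ip (- x) z = - ip x z.
Proof. by rewrite -scaleN1r ipZl mulN1r. Qed.

Lemma ipBl x y z : ip (x - y) z = ip x z - ip y z.
Proof. by rewrite ipDl ipNl. Qed.

Lemma ipDr x y z : ip z (x + y) = ip z x + ip z y.
Proof. by rewrite hsym ipDl rmorphD /= -!hsym. Qed.

Lemma ipZr a x z : ip z (a *: x) = conjc a * ip z x.
Proof. by rewrite hsym ipZl rmorphM /= -hsym. Qed.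

Lemma ipNr x z : ip z (- x) = - ip z x.
Proof. by rewrite hsym ipNl rmorphN /= -hsym. Qed.

Lemma ipBr x y z : ip z (x - y) = ip z x - ip z y.
Proof. by rewrite ipDr ipNr. Qed.

Lemma ip0r z : ip z 0 = 0.
Proof. by rewrite hsym ip0l conjc0. Qed.

Lemma ipxx x : ip x x = real_complex R (rr x x).
Proof.
rewrite /rr; move: (hpos x); case: (ip x x) => a b.
rewrite lecE /=. move=> /andP[/eqP h _]. by rewrite h.
Qed.

Lemma rr_ge0 x : 0 <= rr x x.
Proof. by have := hpos x; rewrite ipxx lecR. Qed.

Lemma rr_eq0 x : rr x x = 0 -> x = 0.
Proof. by move=> h; apply: hdef; rewrite ipxx h. Qed.

Lemma ReM_real (s : R) (w : R[i]) : complex.Re (real_complex R s * w) = s * complex.Re w.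
Proof. by case: w => a b /=; rewrite mul0r subr0. Qed.

Lemma rrC x y : rr x y = rr y x.
Proof. by rewrite /rr [ip y x]hsym; case: (ip x y). Qed.

Lemma rrDl x y z : rr (x + y) z = rr x z + rr y z.
Proof. by rewrite /rr ipDl; case: (ip x z); case: (ip y z). Qed.

Lemma rrZl (s : R) x z : rr (real_complex R s *: x) z = s * rr x z.
Proof. by rewrite /rr ipZl ReM_real. Qed.

Lemma rrNl x z : rr (- x) z = - rr x z.
Proof. by rewrite /rr ipNl; case: (ip x z). Qed.

Lemma rrDr x y z : rr z (x + y) = rr z x + rr z y.
Proof. by rewrite rrC rrDl !(rrC z). Qed.

Lemma rrZr (s : R) x z : rr z (real_complex R s *: x) = s * rr z x.
Proof. by rewrite rrC rrZl rrC. Qed.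

Lemma rrNr x z : rr z (- x) = - rr z x.
Proof. by rewrite rrC rrNl rrC. Qed.

Lemma rr0l z : rr 0 z = 0.
Proof. by rewrite /rr ip0l. Qed.

Lemma rr0r z : rr z 0 = 0.
Proof. by rewrite /rr ip0r. Qed.

Lemma N_ge0 x : 0 <= N x.
Proof. exact: sqrtr_ge0. Qed.

Lemma N_sqr x : N x ^+ 2 = rr x x.
Proof. by rewrite /hnorm sqr_sqrtr // rr_ge0. Qed.

Lemma N0 : N 0 = 0.
Proof. by rewrite /hnorm ip0l sqrtr0. Qed.

Lemma N_eq0 x : N x = 0 -> x = 0.
Proof. by move=> h; apply: rr_eq0; rewrite -N_sqr h expr0n. Qed.

Lemma sqr_le (a b : R) : 0 <= a -> 0 <= b -> a ^+ 2 <= b ^+ 2 -> a <= b.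
Proof. move=> ha hb h; rewrite -ler_sqr ?nnegrE //. Qed.

Lemma sqr_eq (a b : R) : 0 <= a -> 0 <= b -> a ^+ 2 = b ^+ 2 -> a = b.
Proof. by move=> ha hb h; apply/le_anti/andP; split; apply: sqr_le => //; rewrite h. Qed.

Lemma CS_real x y : rr x y ^+ 2 <= rr x x * rr y y.
Proof.
have [y0|yn0] := eqVneq (rr y y) 0.
  by rewrite (rr_eq0 _ y0) rr0r expr0n rr0r mulr0.
have yp : 0 < rr y y by rewrite lt_def yn0 rr_ge0.
pose s := - (rr x y / rr y y).
have := rr_ge0 (x + real_complex R s *: y).
rewrite !rrDl !rrDr !rrZl !rrZr (rrC y x) /s.
move=> h.
have e : rr x y / rr y y * rr y y = rr x y by rewrite mulfVK.
set q := rr x y / rr y y in h e.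
nra.
Qed.

Lemma CS_realN x y : `|rr x y| <= N x * N y.
Proof.
apply: sqr_le; rewrite ?mulr_ge0 ?N_ge0 //.
by rewrite real_normK ?num_real // exprMn !N_sqr CS_real.
Qed.

Lemma normc_ge0 (c : R[i]) : 0 <= Normc.normc c.
Proof. by case: c => a b; apply: sqrtr_ge0. Qed.

Lemma normc_sqr (a b : R) : Normc.normc (Complex a b) ^+ 2 = a ^+ 2 + b ^+ 2.
Proof. by rewrite [Normc.normc _]/(Num.sqrt _) sqr_sqrtr // addr_ge0 // sqr_ge0. Qed.

Lemma ReCCk (c : R[i]) (k : R) :
  complex.Re (c * (conjc c * real_complex R k)) = Normc.normc c ^+ 2 * k.
Proof.
case: c => a b; rewrite normc_sqr.
change (a * (a * k - - b * 0) - b * (a * 0 + - b * k) = (a ^+ 2 + b ^+ 2) * k).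
ring.
Qed.

Lemma N_scale (c : R[i]) x : N (c *: x) = Normc.normc c * N x.
Proof.
apply: sqr_eq; rewrite ?mulr_ge0 ?N_ge0 ?normc_ge0 //.
by rewrite exprMn !N_sqr /rr ipZl ipZr ipxx ReCCk.
Qed.

Lemma ReJC (w : R[i]) : complex.Re (conjc w * w) = Normc.normc w ^+ 2.
Proof.
case: w => a b; rewrite normc_sqr.
change (a * a - - b * b = a ^+ 2 + b ^+ 2).
ring.
Qed.

Lemma normcJ (w : R[i]) : Normc.normc (conjc w) = Normc.normc w.
Proof.
apply: sqr_eq; rewrite ?normc_ge0 //; case: w => a b.
change (Normc.normc (Complex a (- b)) ^+ 2 = Normc.normc (Complex a b) ^+ 2).
by rewrite !normc_sqr sqrrN.
Qed.

Lemma CS x y : Normc.normc (ip x y) <= N x * N y.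
Proof.
set w := ip x y.
have h1 : rr (conjc w *: x) y = Normc.normc w ^+ 2 by rewrite /rr ipZl ReJC.
have h2 := CS_realN (conjc w *: x) y.
rewrite h1 N_scale normcJ ger0_norm ?exprn_ge0 ?normc_ge0 // in h2.
have := normc_ge0 w; have := mulr_ge0 (N_ge0 x) (N_ge0 y).
move: h2; rewrite -mulrA; set P := N x * N y; set n := Normc.normc w.
nra.
Qed.

Lemma NN x : N (- x) = N x.
Proof.
rewrite -scaleN1r N_scale.
have -> : Normc.normc (-1 : R[i]) = 1.
  apply: sqr_eq; rewrite ?normc_ge0 //.
change (Normc.normc (Complex (- 1 : R) (- 0)) ^+ 2 = 1 ^+ 2).
by rewrite normc_sqr oppr0 expr0n addr0 sqrrN.
by rewrite mul1r.
Qed.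

Lemma N_triangle x y : N (x + y) <= N x + N y.
Proof.
apply: sqr_le; rewrite ?addr_ge0 ?N_ge0 //.
rewrite N_sqr rrDl !rrDr (rrC y x) sqrrD !N_sqr.
have := CS_realN x y; have := ler_norm (rr x y). nra.
Qed.

Lemma N_sub x y : N (x - y) <= N x + N y.
Proof. by rewrite -(NN y) N_triangle. Qed.

Hypothesis hcomp : forall u : nat -> V,
  (forall e : R, 0 < e -> exists N : nat, forall m n : nat,
     (N <= m)%N -> (N <= n)%N -> hnorm ip (u m - u n) < e) ->
  exists l : V, forall e : R, 0 < e -> exists N : nat, forall n : nat,
     (N <= n)%N -> hnorm ip (u n - l) < e.

Local Notation RC := (real_complex R).

Lemma archi_inv (c : R) : 0 < c -> exists n : nat, (n.+1%:R : R)^-1 < c.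
Proof.
move=> c0; exists (Num.trunc c^-1).
by rewrite -[X in _ < X]invrK ltf_pV2 ?posrE ?invr_gt0 // truncnS_gt.
Qed.

Lemma inv_mono (m n : nat) : (n <= m)%N -> (m.+1%:R : R)^-1 <= (n.+1%:R)^-1.
Proof. by move=> h; rewrite lef_pV2 ?posrE ?ltr0Sn // ler_nat ltnS. Qed.

Arguments archi_inv {c}.
Arguments inv_mono {m n}.

Lemma normc_real (k : R) : Normc.normc (RC k) = `|k|.
Proof.
apply: sqr_eq; rewrite ?normc_ge0 //.
change (Normc.normc (Complex k 0) ^+ 2 = `|k| ^+ 2).
by rewrite normc_sqr real_normK ?num_real // expr0n addr0.
Qed.

Lemma parallelogram a b : N (a - b) ^+ 2 + N (a + b) ^+ 2 = 2 * N a ^+ 2 + 2 * N b ^+ 2.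
Proof.
rewrite !N_sqr !rrDl !rrDr !rrNl !rrNr (rrC b a); ring.
Qed.

Lemma riesz_real (f : V -> R) (M : R) :
  (forall (s : R) x y, f (RC s *: x + y) = s * f x + f y) ->
  (forall x, `|f x| <= M * N x) ->
  exists z, forall x, f x = rr x z.
Proof.
move=> flin fb.
have f0 : f 0 = 0.
  have := flin 1 0 0; rewrite scaler0 addr0 mul1r => /eqP.
  by rewrite -subr_eq0 opprD addrA subrr add0r oppr_eq0 => /eqP.
have fZ s x : f (RC s *: x) = s * f x by rewrite -[RC s *: x]addr0 flin f0 addr0.
have fD x y : f (x + y) = f x + f y by have := flin 1 x y; rewrite rmorph1 scale1r mul1r.
have fN x : f (- x) = - f x by have := fZ (-1) x; rewrite rmorphN1 scaleN1r mulN1r.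
have fB x y : f (x - y) = f x - f y by rewrite fD fN.
have [fz|] := pselect (forall x, f x = 0).
  by exists 0 => x; rewrite fz rr0r.
move=> /existsNP[x0 fx0].
have M0 : 0 <= M.
  have := fb x0; have := N_ge0 x0; have : 0 < `|f x0| by rewrite normr_gt0; apply/eqP.
  nra.
pose E := [set f x | x in [set x | N x <= 1]].
pose K := sup E.
have hE0 : E !=set0 by exists (f 0), 0 => //=; rewrite N0.
have hub : ubound E M.
  move=> _ [x /= hx <-]; have := fb x; have := ler_norm (f x); nra.
have hsup : has_sup E by split => //; exists M.
have fle w : f w <= K * N w.
  have [w0|wn0] := eqVneq (N w) 0.
    by rewrite (N_eq0 _ w0) f0 N0 mulr0.
  have wp : 0 < N w by rewrite lt_def wn0 N_ge0.
  have h : E (f (RC (N w)^-1 *: w)).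
    exists (RC (N w)^-1 *: w) => //=.
    by rewrite N_scale normc_real ger0_norm ?invr_ge0 ?N_ge0 // mulVf.
  have := ub_le_sup hsup.2 h; rewrite fZ -/K.
  rewrite ler_pdivrMl //; by rewrite mulrC.
have Kp : 0 < K.
  have [x1 [fx1 Nx1]] : exists x1, 0 < f x1 /\ 0 <= N x1.
    case: (ltrgtP (f x0) 0) => h.
    - by exists (- x0); rewrite fN oppr_gt0 N_ge0.
    - by exists x0; rewrite N_ge0.
    - by case: fx0.
  have := fle x1; nra.
have hseq n : exists x, N x <= 1 /\ K - (n.+1%:R)^-1 < f x.
  have ep : 0 < (n.+1%:R : R)^-1 by rewrite invr_gt0 ltr0Sn.
  have [_ [x hx <-] hlt] := sup_adherent ep hsup.
  by exists x.
have [xs hxs] := choice hseq.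
have cauchy m n : K * N (xs m - xs n) ^+ 2 <= 4 * ((m.+1%:R)^-1 + (n.+1%:R)^-1).
  have [hm1 hm2] := hxs m; have [hn1 hn2] := hxs n.
  have hp := parallelogram (xs m) (xs n).
  have hf := fle (xs m + xs n); rewrite fD in hf.
  have em : 0 < (m.+1%:R : R)^-1 by rewrite invr_gt0 ltr0Sn.
  have en : 0 < (n.+1%:R : R)^-1 by rewrite invr_gt0 ltr0Sn.
  set P := N (xs m + xs n) in hp hf.
  set Q := N (xs m - xs n) in hp *.
  set a := N (xs m) in hm1 hp; set b := N (xs n) in hn1 hp.
  have a0 : 0 <= a := N_ge0 _. have b0 : 0 <= b := N_ge0 _.
  have P0 : 0 <= P := N_ge0 _.
  set e1 := (m.+1%:R : R)^-1 in em hm2 *; set e2 := (n.+1%:R : R)^-1 in en hn2 *.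
  have a2 : a ^+ 2 <= 1 by nra.
  have b2 : b ^+ 2 <= 1 by nra.
  have hQ : Q ^+ 2 <= 4 - P ^+ 2 by nra.
  have KP : K * P > 2 * K - e1 - e2 by nra.
  have hKQ : K * Q ^+ 2 <= K * (4 - P ^+ 2) by rewrite ler_pM2l.
  have [P2|P2] := leP 2 P.
    have h4 : 4 - P ^+ 2 <= 0 by nra.
    have : K * (4 - P ^+ 2) <= 0 by rewrite pmulr_rle0.
    lra.
  have h1 : 2 * K - K * P < e1 + e2 by lra.
  have h2 : K * (4 - P ^+ 2) = (2 + P) * (2 * K - K * P) by ring.
  have h3 : (2 + P) * (2 * K - K * P) <= (2 + P) * (e1 + e2).
    by rewrite ler_pM2l ?ltW //; lra.
  have h5 : (2 + P) * (e1 + e2) <= 4 * (e1 + e2).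
    by rewrite ler_pM2r; lra.
  lra.
have hc : forall e : R, 0 < e -> exists N0 : nat, forall m n : nat,
     (N0 <= m)%N -> (N0 <= n)%N -> N (xs m - xs n) < e.
  move=> e ep.
  have [N0 hN0] := archi_inv (mulr_gt0 (mulr_gt0 ep ep) (divr_gt0 Kp (ltr0Sn R 7))).
  exists N0 => m n hm hn.
  have := cauchy m n; have := inv_mono hm; have := inv_mono hn.
  have := N_ge0 (xs m - xs n).
  set Q := N (xs m - xs n); set e0 := (N0.+1%:R : R)^-1 in hN0 *.
  move=> Q0 h1 h2 hc.
  have h3 : 8 * e0 < 8 * (e * e * (K / 8)) by rewrite ltr_pM2l.
  have h4 : 8 * (e * e * (K / 8)) = K * e ^+ 2.
    by field.
  have : K * Q ^+ 2 < K * e ^+ 2.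
    move: h1 h2 hc h3 h4; set A := K * Q ^+ 2; set B := e * e * (K / 8); set C := K * e ^+ 2; set a1 := (m.+1%:R : R)^-1; set a2 := (n.+1%:R : R)^-1. lra.
  rewrite ltr_pM2l // => hQ.
  have e0' : 0 <= e by apply: ltW.
  nra.
have [l hl] := hcomp xs hc.
have Nl1 : N l <= 1.
  apply/ler_addgt0Pr => e ep.
  have [N1 hN1] := hl e ep.
  have := hN1 N1 (leqnn _); have [h1 _] := hxs N1.
  have := N_sub (xs N1) (xs N1 - l); rewrite subKr.
  lra.
have fl1 : K <= f l.
  apply/ler_addgt0Pr => e ep.
  have ep3 : 0 < e / 2 by apply: divr_gt0.
  have M1 : 0 < M + 1 by lra.
  have ep2 : 0 < e / 2 / (M + 1) by apply: divr_gt0.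
  have [N1 hN1] := hl (e / 2 / (M + 1)) ep2.
  have [N2 hN2] := archi_inv ep3.
  pose n := maxn N1 N2.
  have := hN1 n (leq_maxl _ _); have [_ h0] := hxs n.
  have := inv_mono (leq_maxr N1 N2 : (N2 <= n)%N).
  have := fb (xs n - l); rewrite fB.
  have := N_ge0 (xs n - l); have := ler_norm (f (xs n) - f l).
  set q := N (xs n - l); set en := (n.+1%:R : R)^-1.
  set e2 := (N2.+1%:R : R)^-1 in hN2 *.
  move=> h1 h2 h3 h4 h5.
  have hM : M * q <= e / 2.
    have -> : e / 2 = (M + 1) * (e / 2 / (M + 1)) by rewrite [RHS]mulrC divfK // gt_eqF.
    nra.
  have e2h : e / 2 + e / 2 = e by field.
  move: h0 h1 h2 h3 h4 h5 hM hN2 e2h; rewrite -/en; set eh := e / 2; set ee := eh / (M + 1); set fx := f (xs n); set fl := f l.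
  set nn := `|fx - fl|.
  lra.
have Nl : N l = 1.
  apply/le_anti; rewrite Nl1 /=; have := fle l; nra.
have rll : rr l l = 1 by rewrite -N_sqr Nl expr1n.
have fl : f l = K by apply/le_anti; rewrite fl1 andbT; have := fle l; rewrite Nl mulr1.
have orth u : f u = 0 -> rr l u = 0.
  move=> fu.
  have hs s : 0 <= 2 * s * rr l u + s ^+ 2 * rr u u.
    have := fle (l + RC s *: u); rewrite fD fZ fu mulr0 addr0 fl.
    rewrite -[X in X <= _]mulr1 ler_pM2l // => h.
    have : 1 <= N (l + RC s *: u) ^+ 2 by rewrite -(expr1n _ 2) ler_sqr ?nnegrE ?N_ge0.
    rewrite N_sqr !rrDl !rrDr !rrZl !rrZr rll (rrC u l); lra.
  set a := rr l u; set b := rr u u.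
  have b0 : 0 <= b := rr_ge0 u.
  pose s := - (a / (b + 1)).
  have hb1 : 0 < b + 1 by lra.
  have hs1 : s * (b + 1) = - a by rewrite /s mulNr divfK // lt0r_neq0.
  have key : 0 <= (2 * s * a + s ^+ 2 * b) * (b + 1) ^+ 2 by rewrite mulr_ge0 ?sqr_ge0 ?hs.
  have eq : (2 * s * a + s ^+ 2 * b) * (b + 1) ^+ 2 = 2 * a * (s * (b + 1)) * (b + 1) + (s * (b + 1)) ^+ 2 * b by ring.
  rewrite eq hs1 in key.
  have a2 : a ^+ 2 * (b + 2) <= 0 by nra.
  have a20 : a ^+ 2 <= 0 by nra.
  apply/eqP; rewrite -sqrf_eq0; apply/eqP/le_anti; rewrite a20 sqr_ge0 //.
exists (RC K *: l) => y.
have := orth (y - RC (f y / K) *: l).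
rewrite fB fZ fl mulfVK ?gt_eqF // subrr => /(_ erefl).
rewrite rrDr rrNr rrZr rll mulr1 rrZr (rrC y l) => /eqP; rewrite subr_eq0 => /eqP ->.
by rewrite mulrC mulfVK ?gt_eqF.
Qed.

Lemma complex_eq2 (w1 w2 : R[i]) :
  complex.Re w1 = complex.Re w2 ->
  complex.Re ('i%C * w1) = complex.Re ('i%C * w2) -> w1 = w2.
Proof.
case: w1 => a1 b1; case: w2 => a2 b2.
change (a1 = a2 -> 0 * a1 - 1 * b1 = 0 * a2 - 1 * b2 -> Complex a1 b1 = Complex a2 b2).
by move=> -> h; congr Complex; lra.
Qed.

Lemma lin0 (B : V -> V) : (forall (a : R[i]) (x y : V), B (a *: x + y) = a *: B x + B y) ->
  B 0 = 0.
Proof.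
move=> hB; have := hB 1 0 0; rewrite scaler0 addr0 scale1r => /eqP.
by rewrite -subr_eq0 opprD addrA subrr add0r oppr_eq0 => /eqP.
Qed.

Lemma adj_exists (B : V -> V) : bounded_op ip B -> exists Bs, is_adjoint ip B Bs.
Proof.
move=> [hB [M hM]].
have B0 := lin0 _ hB.
have BZ a x : B (a *: x) = a *: B x by rewrite -[a *: x]addr0 hB B0 addr0.
suff hy : forall y, exists z, forall x, ip (B x) y = ip x z.
  by have [Bs hBs] := choice hy; exists Bs => x y; apply: hBs.
move=> y.
pose f x := rr (B x) y.
have [z hz] : exists z, forall x, f x = rr x z.
  apply: (@riesz_real f (M * N y)).
    by move=> s x x'; rewrite /f hB rrDl rrZl.
  move=> x; rewrite /f.
  apply: (le_trans (CS_realN _ _)).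
  rewrite mulrAC ler_wpM2r ?N_ge0 //.
exists z => x.
apply: complex_eq2.
  exact: hz.
rewrite -ipZl -BZ -ipZl.
exact: hz.
Qed.

Lemma adj_spec (B : V -> V) : bounded_op ip B -> is_adjoint ip B (adj ip B).
Proof. by move=> hB; rewrite /adj; apply: epsilon_spec; apply: adj_exists. Qed.
Arguments adj_spec {B}.

Lemma ip_inj_r u v : (forall x, ip x u = ip x v) -> u = v.
Proof.
move=> h; apply/eqP; rewrite -subr_eq0; apply/eqP; apply: hdef.
by rewrite ipBr h subrr.
Qed.

Lemma adj_sub (B C : V -> V) : bounded_op ip B -> bounded_op ip C ->
  forall y, adj ip (fun x => B x - C x) y = adj ip B y - adj ip C y.
Proof.
move=> hB hC.
have hD : is_adjoint ip (fun x => B x - C x) (fun y => adj ip B y - adj ip C y).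
  by move=> x y; rewrite ipBl ipBr (adj_spec hB) (adj_spec hC).
have hD' : is_adjoint ip (fun x => B x - C x) (adj ip (fun x => B x - C x)).
  by rewrite /adj; apply: epsilon_spec; exists (fun y => adj ip B y - adj ip C y).
by move=> y; apply: ip_inj_r => x; rewrite -hD' hD.
Qed.

Lemma adj_bound (B : V -> V) (M : R) : bounded_op ip B ->
  (forall x, N (B x) <= M * N x) -> forall y, N (adj ip B y) <= M * N y.
Proof.
move=> hB hM y.
have h := adj_spec hB (adj ip B y) y.
have h1 : rr (B (adj ip B y)) y = N (adj ip B y) ^+ 2 by rewrite N_sqr /rr h.
have h2 := CS_realN (B (adj ip B y)) y.
have h3 := hM (adj ip B y).
have h4 : 0 <= M * N y by apply: le_trans (hM y); apply: N_ge0.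
have h5 := N_ge0 (adj ip B y). have h6 := N_ge0 y.
have h7 : N (adj ip B y) ^+ 2 <= M * N (adj ip B y) * N y.
  apply: le_trans (ler_norm _) _; rewrite -h1; apply: le_trans h2 _.
  by rewrite ler_wpM2r.
move: h7; rewrite mulrAC; set n := N (adj ip B y); set P := M * N y.
move: h4 h5; rewrite -/P => h4 h5 h7.
nra.
Qed.
Arguments adj_bound {B M}.

Lemma opt_bound (B : V -> V) (M p q : R) : bounded_op ip B ->
  (forall x, N (B x) <= M * N x) ->
  forall x, N (real_complex R p *: B x + real_complex R q *: adj ip B x) <= (`|p| + `|q|) * M * N x.
Proof.
move=> hB hM x.
apply: le_trans (N_triangle _ _) _.
rewrite !N_scale !normc_real.
have := hM x; have := adj_bound hB hM x.
have := normr_ge0 p; have := normr_ge0 q.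
set a := N (B x); set b := N (adj ip B x); set P := M * N x.
rewrite -mulrA -/P.
nra.
Qed.

Lemma normc_dist (a b : R[i]) : `|Normc.normc a - Normc.normc b| <= Normc.normc (a - b).
Proof.
have h1 : Normc.normc a <= Normc.normc (a - b) + Normc.normc b.
  by have := le_normcD (a - b) b; rewrite subrK.
have h2 : Normc.normc b <= Normc.normc (a - b) + Normc.normc a.
  by have := le_normcD (b - a) a; rewrite subrK -opprB normcN.
rewrite ler_norml; apply/andP; split; lra.
Qed.

Lemma bounded_sub (B C : V -> V) : bounded_op ip B -> bounded_op ip C ->
  bounded_op ip (fun x => B x - C x).
Proof.
move=> [hB [MB hMB]] [hC [MC hMC]]; split.
  by move=> a x y; rewrite hB hC opprD addrACA -scalerBr.
exists (MB + MC) => x; apply: le_trans (N_sub _ _) _.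
by rewrite mulrDl lerD.
Qed.

Lemma est (phi psi : R -> R) (t : R) (B C : V -> V) :
  bounded_op ip B -> bounded_op ip C ->
  `|omega_t ip phi psi t B - omega_t ip phi psi t C| <= `|tnorm ip phi psi t (fun x => B x - C x)| /\
  `|c_t ip phi psi t B - c_t ip phi psi t C| <= `|tnorm ip phi psi t (fun x => B x - C x)|.
Proof.
move=> hB hC.
have hD := bounded_sub _ _ hB hC.
set D := (fun x => B x - C x) in hD *.
set e := tnorm ip phi psi t D.
rewrite /omega_t /c_t.
set g := fun (X : V -> V) x => Normc.normc (ip (opt ip phi psi t X x) x).
have [[x0 hx0]|S1e] := pselect (exists x, S1 ip x); last first.
  have -> : S1 ip = set0.
    by apply/seteqP; split => x // hx; apply: S1e; exists x.
  by rewrite !image_set0 !subrr normr0 !normr_ge0.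
have optD x : opt ip phi psi t D x = opt ip phi psi t B x - opt ip phi psi t C x.
  rewrite /opt /D adj_sub // !scalerBr opprD !addrA; congr (_ + _).
  by rewrite addrAC.
have bnd (X : V -> V) : bounded_op ip X -> exists K, forall x, S1 ip x ->
    N (opt ip phi psi t X x) <= K.
  move=> hX; have [_ [M hM]] := hX.
  exists ((`|phi t| + `|psi t|) * M) => x hx.
  have := opt_bound X M (phi t) (psi t) hX hM x; rewrite /S1 /= in hx; rewrite hx mulr1.
  by [].
have g_ub (X : V -> V) : bounded_op ip X -> has_ubound [set g X x | x in S1 ip].
  move=> hX; have [K hK] := bnd X hX; exists K => _ [x hx <-].
  apply: le_trans (CS _ _) _; rewrite /S1 /= in hx; rewrite hx mulr1; exact: hK.
have g_lb (X : V -> V) : has_lbound [set g X x | x in S1 ip].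
  by exists 0 => _ [x hx <-]; apply: normc_ge0.
have hdiff x : S1 ip x -> `|g B x - g C x| <= e.
  move=> hx; apply: le_trans (normc_dist _ _) _.
  rewrite -ipBl -optD; apply: le_trans (CS _ _) _.
  have hx' := hx; rewrite /S1 /= in hx'; rewrite hx' mulr1.
  have [K hK] := bnd D hD.
  apply: (ub_le_sup _ (ex_intro2 _ _ x hx erefl)).
  by exists K => _ [y hy <-]; apply: hK.
have e_abs : e <= `|e| by apply: ler_norm.
have ne (X : V -> V) : [set g X x | x in S1 ip] !=set0 by exists (g X x0), x0.
split.
- have h1 : sup [set g B x | x in S1 ip] <= sup [set g C x | x in S1 ip] + e.
    apply: ge_sup => // _ [x hx <-].
    have := ub_le_sup (g_ub C hC) (ex_intro2 _ _ x hx erefl).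
    have := hdiff x hx; rewrite ler_norml => /andP[_ h]; lra.
  have h2 : sup [set g C x | x in S1 ip] <= sup [set g B x | x in S1 ip] + e.
    apply: ge_sup => // _ [x hx <-].
    have := ub_le_sup (g_ub B hB) (ex_intro2 _ _ x hx erefl).
    have := hdiff x hx; rewrite ler_norml => /andP[h _]; lra.
  apply: le_trans e_abs; rewrite ler_norml; apply/andP; split; lra.
- have h1 : inf [set g C x | x in S1 ip] - e <= inf [set g B x | x in S1 ip].
    apply: lb_le_inf => // _ [x hx <-].
    have := ge_inf (g_lb C) (ex_intro2 _ _ x hx erefl).
    have := hdiff x hx; rewrite ler_norml => /andP[h _]; lra.
  have h2 : inf [set g B x | x in S1 ip] - e <= inf [set g C x | x in S1 ip].
    apply: lb_le_inf => // _ [x hx <-].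
    have := ge_inf (g_lb B) (ex_intro2 _ _ x hx erefl).
    have := hdiff x hx; rewrite ler_norml => /andP[_ h]; lra.
  apply: le_trans e_abs; rewrite ler_norml; apply/andP; split; lra.
Qed.

End Basics.
Theorem theorem2p5 (R : realType) (V : lmodType R[i]) (ip : V -> V -> R[i])
  (hH : is_hilbert ip) (phi psi : R -> R)
  (hphi : {within `[(0:R), 1], continuous phi})
  (hpsi : {within `[(0:R), 1], continuous psi})
  (t : R) (ht : t \in `[0, 1])
  (An : nat -> V -> V) (A : V -> V)
  (hAn : forall n, bounded_op ip (An n)) (hA : bounded_op ip A)
  (hconv : (fun n => tnorm ip phi psi t (fun x => An n x - A x)) @ \oo --> 0) :
  (fun n => omega_t ip phi psi t (An n)) @ \oo --> omega_t ip phi psi t A /\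
  (fun n => c_t ip phi psi t (An n)) @ \oo --> c_t ip phi psi t A.
Proof.
case: hH => hlin hsym hpos hdef hcomp.
have hest n := est _ _ _ hlin hsym hpos hdef hcomp phi psi t _ _ (hAn n) hA.
have key (a : nat -> R) (b : R) : (forall n, `|a n - b| <= `|tnorm ip phi psi t (fun x => An n x - A x)|) ->
    a @ \oo --> b.
  move=> hab; apply/cvgrPdist_le => eps ep.
  move/cvgrPdist_le: hconv => /(_ eps ep); apply: filterS => n hn.
  rewrite sub0r normrN in hn; rewrite distrC.
  exact: le_trans (hab n) hn.
by split; apply: key => n; [exact: (hest n).1 | exact: (hest n).2].
Qed.
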